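(* Every ice fork with exactly two frozen vertices is a brog quiver.
   Context: A quiver is a finite directed multigraph with no loops and no oriented 2-cycles, whose vertex set is partitioned into mutable and frozen vertices; arrows between two frozen vertices are ignored. $b_{ik}$ = number of arrows $i\to k$ minus number of arrows $k\to i$; mutable vertices are labelled $[n]$; $Q|_S$ is the induced subquiver on $S$. Abundant: at least 2 arrows between every pair of vertices at least one of which is mutable. $F^+(r)=\{i: r\to i\}$, $F^-(r)=\{j:j\to r\}$. A fork is an abundant non-acyclic quiver with at most one frozen vertex and a vertex $r$ (point of return) such that $b_{ij}>b_{ri}$ and $b_{ij}>b_{jr}$ for all $i\in F^+(r),j\in F^-(r)$, and the subquivers induced on $F^+(r)$ and $F^-(r)$ are acyclic. An ice fork with point of return $r$ is a quiver with mutable vertices $[n]$ and frozen vertices $u_1,\dots,u_m$ ($m\ge1$) such that each $Q|_{[n]\cup\{u_i\}}$ is a fork with point of return $r$. A mutable vertex adjacent to at least one frozen vertex is red (resp. green) if all arrows between it and frozen vertices point towards (resp. away from) it. Two mutable vertices $i,j$ are complementary if for every frozen vertex $u$ with $b_{iu}\ne0$ and $b_{ju}\ne0$, $b_{iu}$ and $b_{ju}$ have opposite signs. A quiver is brog if its mutable vertices can be coloured blue, red, orange and green such that: (1) the vertices coloured red are exactly the red vertices; (2) the vertices coloured green are exactly the green vertices; (3) each blue vertex $i$ has $b_{ij}\ge0$ for every red $j$ and $b_{ij}\le0$ for every green $j$; (4) each orange vertex $i$ has $b_{ij}\ge0$ for every green $j$ and $b_{ij}\le0$ for every red $j$; (5)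 every blue vertex and every orange vertex are complementary. *)

(* Defs.v *)
From mathcomp Require Import all_boot all_order all_algebra.
Set Implicit Arguments. Unset Strict Implicit. Unset Printing Implicit Defensive.
Import Order.TTheory GRing.Theory Num.Theory.
Local Open Scope ring_scope.

(* Vertices: mutable vertices 'I_n (the paper's [n]) and frozen vertices 'I_m. *)
Definition vert (n m : nat) : finType := ('I_n + 'I_m)%type.

Definition mutableb {n m} (x : vert n m) : bool := if x is inl _ then true else false.
Definition frozenb {n m} (x : vert n m) : bool := ~~ mutableb x.

(* A quiver is given by its arrow counts: a x y = number of arrows x -> y. *)
Definition is_quiver {n m} (a : vert n m -> vert n m -> nat) : Prop :=
  (forall x, a x x = 0%N) /\ (forall x y, a x y = 0%N \/ a y x = 0%N).

Definition bmat {n m} (a : vert n m -> vert n m -> nat) (x y : vert n m) : int :=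
  (a x y)%:Z - (a y x)%:Z.

Definition arr {n m} (a : vert n m -> vert n m -> nat) : rel (vert n m) :=
  fun x y => (0 < bmat a x y) && (mutableb x || mutableb y).

Definition has_cycle_on {n m} (a : vert n m -> vert n m -> nat) (S : pred (vert n m)) : Prop :=
  exists (x : vert n m) (s : seq (vert n m)), all S (x :: s) /\ cycle (arr a) (x :: s).

Definition acyclic_on {n m} (a : vert n m -> vert n m -> nat) (S : pred (vert n m)) : Prop :=
  ~ has_cycle_on a S.

Definition abundant_on {n m} (a : vert n m -> vert n m -> nat) (S : pred (vert n m)) : Prop :=
  forall x y, S x -> S y -> x != y -> (mutableb x || mutableb y) -> 2 <= `|bmat a x y|.

Definition Fplus {n m} (a : vert n m -> vert n m -> nat) (S : pred (vert n m)) (r : vert n m)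
  : pred (vert n m) := fun i => S i && arr a r i.
Definition Fminus {n m} (a : vert n m -> vert n m -> nat) (S : pred (vert n m)) (r : vert n m)
  : pred (vert n m) := fun j => S j && arr a j r.

Definition is_fork_on {n m} (a : vert n m -> vert n m -> nat) (S : pred (vert n m)) (r : vert n m)
  : Prop :=
  [/\ abundant_on a S,
      has_cycle_on a S,
      (#|[pred x | S x && frozenb x]| <= 1)%N,
      S r
    & [/\ (forall i j, Fplus a S r i -> Fminus a S r j ->
            bmat a r i < bmat a i j /\ bmat a j r < bmat a i j),
        acyclic_on a (Fplus a S r)
      & acyclic_on a (Fminus a S r)]].

Definition is_ice_fork {n m} (a : vert n m -> vert n m -> nat) (r : vert n m) : Prop :=
  (1 <= m)%N /\
  forall u : 'I_m, is_fork_on a (fun x => mutableb x || (x == inr u)) r.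

Definition is_red {n m} (a : vert n m -> vert n m -> nat) (i : 'I_n) : Prop :=
  (exists u : 'I_m, bmat a (inl i) (inr u) != 0) /\
  (forall u : 'I_m, bmat a (inl i) (inr u) <= 0).
Definition is_green {n m} (a : vert n m -> vert n m -> nat) (i : 'I_n) : Prop :=
  (exists u : 'I_m, bmat a (inl i) (inr u) != 0) /\
  (forall u : 'I_m, 0 <= bmat a (inl i) (inr u)).

Definition complementary {n m} (a : vert n m -> vert n m -> nat) (i j : 'I_n) : Prop :=
  forall u : 'I_m, bmat a (inl i) (inr u) != 0 -> bmat a (inl j) (inr u) != 0 ->
    bmat a (inl i) (inr u) * bmat a (inl j) (inr u) < 0.

Inductive colour := Blue | Red | Orange | Green.

Definition is_brog {n m} (a : vert n m -> vert n m -> nat) : Prop :=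
  exists c : 'I_n -> colour,
    [/\ (forall i, c i = Red <-> is_red a i),
        (forall i, c i = Green <-> is_green a i),
        (forall i j, c i = Blue -> (c j = Red -> 0 <= bmat a (inl i) (inl j))
                                /\ (c j = Green -> bmat a (inl i) (inl j) <= 0)),
        (forall i j, c i = Orange -> (c j = Green -> 0 <= bmat a (inl i) (inl j))
                                /\ (c j = Red -> bmat a (inl i) (inl j) <= 0))
      & (forall i j, c i = Blue -> c j = Orange -> complementary a i j)].

(* Main.v *)
Require Import Defs.
From mathcomp Require Import all_boot all_order all_algebra.
From mathcomp Require Import zify.
Set Implicit Arguments. Unset Strict Implicit. Unset Printing Implicit Defensive.
Import Order.TTheory GRing.Theory Num.Theory.
Local Open Scope ring_scope.

Definition SS {n m} (u : 'I_m) : pred (vert n m) := fun x => mutableb x || (x == inr u).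

Lemma side n m (a : vert n m -> vert n m -> nat) r u x :
  is_fork_on a (SS u) r -> mutableb r -> SS u x -> x != r ->
  0 < bmat a r x \/ 0 < bmat a x r.
Proof.
case=> Hab _ _ Hr _ Hm Hx Hne.
have := Hab x r Hx Hr Hne; rewrite Hm orbT => /(_ isT).
rewrite /bmat; lia.
Qed.

Lemma cross n m (a : vert n m -> vert n m -> nat) r u x y :
  is_fork_on a (SS u) r -> mutableb r -> SS u x -> SS u y ->
  0 < bmat a r y -> 0 < bmat a x r -> 0 < bmat a y x.
Proof.
case=> _ _ _ _ [Hin _ _] Hm Hx Hy Hry Hxr.
have [] := Hin y x.
  by rewrite /Fplus Hy /arr Hry Hm.
  by rewrite /Fminus Hx /arr Hxr Hm orbT.
move=> H1 _; exact: lt_trans Hry H1.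
Qed.

Lemma no3 n m (a : vert n m -> vert n m -> nat) r u x y z :
  is_fork_on a (SS u) r -> mutableb r -> mutableb x -> mutableb z ->
  SS u y -> x != r -> y != r -> z != r ->
  0 < bmat a x y -> 0 < bmat a y z -> 0 < bmat a z x -> False.
Proof.
move=> Hf Hm Hmx Hmz Hy Hxr Hyr Hzr Hxy Hyz Hzx.
have Hx : SS u x by rewrite /SS Hmx.
have Hz : SS u z by rewrite /SS Hmz.
have Hf' := Hf; case: Hf' => _ _ _ _ [_ Hacp Hacm].
have anti : forall p q, 0 < bmat a p q -> 0 < bmat a q p -> False
  by move=> p q; rewrite /bmat; lia.
have cr := cross Hf Hm.
have [Px|Mx] := side Hf Hm Hx Hxr;
have [Py|My] := side Hf Hm Hy Hyr;
have [Pz|Mz] := side Hf Hm Hz Hzr.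
- apply: Hacp; exists x, [:: y; z].
  by rewrite /= /Fplus Hx Hy Hz /arr Px Py Pz Hxy Hyz Hzx Hm Hmx Hmz !orbT.
- exact: anti _ _ (cr _ _ Hz Hx Px Mz) Hzx.
- exact: anti _ _ (cr _ _ Hy Hz Pz My) Hyz.
- exact: anti _ _ (cr _ _ Hz Hx Px Mz) Hzx.
- exact: anti _ _ (cr _ _ Hx Hy Py Mx) Hxy.
- exact: anti _ _ (cr _ _ Hx Hy Py Mx) Hxy.
- exact: anti _ _ (cr _ _ Hy Hz Pz My) Hyz.
- apply: Hacm; exists x, [:: y; z].
  by rewrite /= /Fminus Hx Hy Hz /arr Mx My Mz Hxy Hyz Hzx Hm Hmx Hmz !orbT.
Qed.

Lemma nz n m (a : vert n m -> vert n m -> nat) r u i :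
  is_fork_on a (SS u) r -> bmat a (inl i) (inr u) != 0.
Proof.
case=> Hab _ _ _ _.
have := Hab (inl i) (inr u) isT; rewrite /SS eqxx orbT => /(_ isT isT isT).
rewrite /bmat; lia.
Qed.

Lemma I2 (u v l : 'I_2) : u != l -> v != l -> u = v.
Proof.
move=> H1 H2; apply/val_inj; move: H1 H2; rewrite -!(inj_eq val_inj) /=.
have := ltn_ord u; have := ltn_ord v; have := ltn_ord l; lia.
Qed.

Lemma Sin n m (u : 'I_m) : SS (n:=n) u (inr u).
Proof. by rewrite /SS /= eqxx. Qed.

Theorem mainTheorem12 (n : nat) (a : vert n 2 -> vert n 2 -> nat) (r : vert n 2) :
  is_quiver a -> is_ice_fork a r -> is_brog a.
Proof.
move=> _ [_ Hf].
have F : forall u, is_fork_on a (SS u) r := Hf.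
case: r Hf F => [r0|v] _ F; last first.
  have [_ _ _ H0 _] := F ord0; have [_ _ _ H1 _] := F ord_max.
  by move: H0 H1; rewrite /SS /= => /eqP [->].
have NZ : forall i u, bmat a (inl i) (inr u) != 0 by move=> i u; exact: nz (F u).
pose redb i := [exists u, bmat a (inl i) (inr u) != 0] && [forall u, bmat a (inl i) (inr u) <= 0].
pose greenb i := [exists u, bmat a (inl i) (inr u) != 0] && [forall u, 0 <= bmat a (inl i) (inr u)].
have redE : forall i, is_red a i <-> redb i.
  move=> i; split.
    by case=> [[u Hu] H]; apply/andP; split; [apply/existsP; exists u|apply/forallP].
  by case/andP=> /existsP [u Hu] /forallP H; split; [exists u|].
have greenE : forall i, is_green a i <-> greenb i.
  move=> i; split.
    by case=> [[u Hu] H]; apply/andP; split; [apply/existsP; exists u|apply/forallP].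
  by case/andP=> /existsP [u Hu] /forallP H; split; [exists u|].
have redneg : forall i u, redb i -> bmat a (inl i) (inr u) < 0.
  move=> i u /andP [_ /forallP /(_ u)]; have := NZ i u; lia.
have greenpos : forall i u, greenb i -> 0 < bmat a (inl i) (inr u).
  move=> i u /andP [_ /forallP /(_ u)]; have := NZ i u; lia.
have notred : forall i, ~~ redb i -> exists u, 0 < bmat a (inl i) (inr u).
  move=> i H; case: (boolP [exists u, 0 < bmat a (inl i) (inr u)]) => [/existsP//|].
  rewrite negb_exists => /forallP H0; exfalso; move: H; apply/negP/negPn/andP; split.
    by apply/existsP; exists ord0; exact: NZ.
  by apply/forallP => u; have := H0 u; lia.
have notgreen : forall i, ~~ greenb i -> exists u, bmat a (inl i) (inr u) < 0.
  move=> i H; case: (boolP [exists u, bmat a (inl i) (inr u) < 0]) => [/existsP//|].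
  rewrite negb_exists => /forallP H0; exfalso; move: H; apply/negP/negPn/andP; split.
    by apply/existsP; exists ord0; exact: NZ.
  by apply/forallP => u; have := H0 u; lia.
have antis : forall x y, bmat a x y = - bmat a y x by move=> x y; rewrite /bmat; lia.
pose c i := if redb i then Red else if greenb i then Green
            else if i == r0 then Orange else Blue.
exists c; split.
- move=> i; rewrite redE /c; case: (redb i) => //; split=> //.
  by case: (greenb i) => //; case: (i == r0).
- move=> i; rewrite greenE /c; case Hr: (redb i); case Hg: (greenb i) => //; split=> //.
  + have := redneg i ord0 Hr; have := greenpos i ord0 Hg; lia.
  + by case: (i == r0).
- move=> i j; rewrite /c; case Hri: (redb i) => //; case Hgi: (greenb i) => //.
  case: eqP => // Hir _; split.
  + case Hrj: (redb j); last by case: (greenb j) => //; case: (j == r0).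
    move=> _; rewrite leNgt; apply/negP => Hlt.
    have Hji : 0 < bmat a (inl j) (inl i).
      rewrite antis; lia.
    have [k Hk] := notred i (negbT Hri).
    case: (eqVneq j r0) => [Ejr|Hjr].
      subst j; move/negP: Hgi; apply; apply/andP; split.
        by apply/existsP; exists ord0; exact: NZ.
      apply/forallP => u; apply: ltW.
      apply: (cross (x:=inr u) (y:=inl i) (F u) isT (Sin _ u) isT Hji).
      by rewrite antis; have := redneg r0 u Hrj; lia.
    apply: (no3 (x:=inl i) (y:=inr k) (z:=inl j) (F k) isT isT isT (Sin _ k) _ _ _ Hk _ Hji).
    * by apply/eqP=> [[]].
    * by [].
    * by apply/eqP=> [[]]; apply/eqP.
    * by rewrite antis oppr_gt0; exact: redneg.
  + case Hrj: (redb j) => //; case Hgj: (greenb j); last by case: (j == r0).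
    move=> _; rewrite leNgt; apply/negP => Hlt.
    have [l Hl] := notgreen i (negbT Hgi).
    case: (eqVneq j r0) => [Ejr|Hjr].
      subst j; move/negP: Hri; apply; apply/andP; split.
        by apply/existsP; exists ord0; exact: NZ.
      apply/forallP => u; apply: ltW; rewrite -oppr_gt0 -antis.
      apply: (cross (x:=inl i) (y:=inr u) (F u) isT isT (Sin _ u)).
        exact: greenpos.
      exact: Hlt.
    apply: (no3 (x:=inl j) (y:=inr l) (z:=inl i) (F l) isT isT isT (Sin _ l) _ _ _ _ _ Hlt).
    * by apply/eqP=> [[]]; apply/eqP.
    * by [].
    * by apply/eqP=> [[]].
    * exact: greenpos.
    * by rewrite antis oppr_gt0.
- move=> i j; rewrite /c; case Hri: (redb i) => //; case Hgi: (greenb i) => //.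
  case: eqP => // Eir _; subst i; split.
  + case Hrj: (redb j) => //; case Hgj: (greenb j); last by case: (j == r0).
    move=> _; rewrite leNgt; apply/negP => Hlt.
    have [k Hk] := notred r0 (negbT Hri).
    have H2 : 0 < bmat a (inl j) (inl r0) by rewrite antis oppr_gt0.
    have H1 := cross (x:=inl j) (y:=inr k) (F k) isT isT (Sin _ k) Hk H2.
    move: H1; rewrite antis oppr_gt0 ltNge => /negP; apply; apply: ltW; exact: greenpos.
  + case Hrj: (redb j); last by case: (greenb j) => //; case: (j == r0).
    move=> _; rewrite leNgt; apply/negP => Hlt.
    have [l Hl] := notgreen r0 (negbT Hgi).
    have H2 : 0 < bmat a (inr l) (inl r0) by rewrite antis oppr_gt0.
    have H1 := cross (x:=inr l) (y:=inl j) (F l) isT (Sin _ l) isT Hlt H2.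
    have := redneg j l Hrj; rewrite ltNge => /negP; apply; exact: ltW.
- move=> i j; rewrite /c; case Hri: (redb i) => //; case Hgi: (greenb i) => //.
  case: eqP => // Hir _.
  case Hrj: (redb j) => //; case Hgj: (greenb j) => //; case: eqP => // Ejr _.
  subst j => u _ _.
  suff : (0 < bmat a (inl i) (inr u) /\ bmat a (inl r0) (inr u) < 0) \/
         (bmat a (inl i) (inr u) < 0 /\ 0 < bmat a (inl r0) (inr u)).
    by case=> [[H1 H2]|[H1 H2]]; [rewrite pmulr_rlt0 | rewrite pmulr_llt0].
  have Hne : inl i != inl r0 :> vert n 2 by apply/eqP=> [[]].
  have [k Hk] := notred r0 (negbT Hrj).
  have [l Hl] := notgreen r0 (negbT Hgj).
  have := NZ r0 u; have := NZ i u.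
  case: (side (F ord0) isT (isT : SS ord0 (inl i)) Hne) => Hs.
  + have Hw : forall w, bmat a (inl r0) (inr w) < 0 -> 0 < bmat a (inl i) (inr w).
      move=> w Hw; apply: (cross (x:=inr w) (y:=inl i) (F w) isT (Sin _ w) isT Hs).
      by rewrite antis; lia.
    have [v Hv] := notgreen i (negbT Hgi).
    have Hrv : 0 < bmat a (inl r0) (inr v).
      have := NZ r0 v; case: (ltrgtP (bmat a (inl r0) (inr v)) 0) => // H.
      by move=> _; move: (Hw v H); rewrite ltNge (ltW Hv).
    case: (ltrgtP (bmat a (inl r0) (inr u)) 0) => Hru.
    * by move=> _ _; left; split=> //; exact: Hw.
    * have Euv : u = v.
        apply: (I2 (l:=l)); apply/eqP=> E; [move: Hru|move: Hrv]; by rewrite E ltNge (ltW Hl).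
      by subst u => _ _; right.
    * by move=> _; rewrite ?Hru ?eqxx.
  + have Hw : forall w, 0 < bmat a (inl r0) (inr w) -> bmat a (inl i) (inr w) < 0.
      move=> w Hw; rewrite -oppr_gt0 -antis.
      exact: (cross (x:=inl i) (y:=inr w) (F w) isT isT (Sin _ w) Hw Hs).
    have [v Hv] := notred i (negbT Hri).
    have Hrv : bmat a (inl r0) (inr v) < 0.
      have := NZ r0 v; case: (ltrgtP (bmat a (inl r0) (inr v)) 0) => // H.
        by move=> _; move: (Hw v H); rewrite ltNge (ltW Hv).
    case: (ltrgtP (bmat a (inl r0) (inr u)) 0) => Hru.
    * have Euv : u = v.
        apply: (I2 (l:=k)); apply/eqP=> E; [move: Hru|move: Hrv]; by rewrite E ltNge (ltW Hk).
      by subst u => _ _; left.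
    * by move=> _ _; right; split=> //; exact: Hw.
    * by move=> _; rewrite ?Hru ?eqxx.
Qed.
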